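(* Let $n>24$, $\epsilon>0$, $L>9$, and $m=Ln$ (assumed to be an integer). Let $v=(v_1,\dots,v_n)$ with $v_i\ge0$ and $\sum_i v_i=1$. Then $$\mathsf P\left\{\mathrm{AST}(v,x)\le L\,n\,\|v\|\,\|p\|\,(1+8\epsilon)+1\right\}\ \ge\ 1-\frac{10}{9}e^{-L\epsilon^2}.$$
   Context: Standing setup: $U$ is a finite set (the key space) with a probability measure $q$; $T=\{1,\dots,n\}$; $h:U\to T$ is an arbitrary function. $p_i=\sum_{u\in h^{-1}(i)}q(u)$ and $\|p\|^2=\sum_{i=1}^n p_i^2$. $U^m$ carries the product measure $q^m$, and $\mathsf P$ denotes probability under $q^m$ for $x=(x_1,\dots,x_m)\in U^m$. $k_i(x)=|\{j: h(x_j)=i\}|$. $\|\cdot\|$ is the euclidean norm. The vector $v$ is a user's access pattern ($v_i$ = fraction of the user's searches directed to slot $i$). $\mathrm{AST}(v,x)$ denotes the average search time of such a user in a hash table with chaining after the keys $x$ have been inserted; in this model it satisfies $\mathrm{AST}(v,x)\le\sum_{i=1}^n v_i\,k_i(x)$. *)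

(* Defs.v *)
From mathcomp Require Import all_boot all_order all_algebra.
From mathcomp Require Import reals.
From mathcomp Require Import sequences exp.
Set Implicit Arguments. Unset Strict Implicit. Unset Printing Implicit Defensive.
Import Order.TTheory GRing.Theory Num.Theory.
Local Open Scope ring_scope.

Definition is_prob (R : realType) (U : finType) (q : U -> R) : Prop :=
  (forall u, 0 <= q u) /\ \sum_(u : U) q u = 1.

Definition pslot (R : realType) (U : finType) (n : nat) (q : U -> R)
  (h : U -> 'I_n) (i : 'I_n) : R := \sum_(u : U | h u == i) q u.

Definition enorm (R : realType) (n : nat) (f : 'I_n -> R) : R :=
  Num.sqrt (\sum_(i < n) f i ^+ 2).

Definition kcount (U : finType) (n m : nat) (h : U -> 'I_n)
  (x : {ffun 'I_m -> U}) (i : 'I_n) : nat := #|[set j : 'I_m | h (x j) == i]|.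

Definition Pm (R : realType) (U : finType) (m : nat) (q : U -> R)
  (E : pred {ffun 'I_m -> U}) : R :=
  \sum_(x : {ffun 'I_m -> U} | E x) \prod_(j < m) q (x j).

(* Main.v *)
Require Import Defs.
From mathcomp Require Import all_boot all_order all_algebra.
From mathcomp Require Import reals.
From mathcomp Require Import sequences exp.
From mathcomp Require Import ring lra.
Import Order.TTheory GRing.Theory Num.Theory.
Local Open Scope ring_scope.

Lemma cs_sq (R : realType) (n : nat) (x y : 'I_n -> R) :
  (\sum_(i < n) x i * y i) ^+ 2 <=
  (\sum_(i < n) x i ^+ 2) * (\sum_(i < n) y i ^+ 2).
Proof.
set A := \sum_(i < n) x i ^+ 2; set B := \sum_(i < n) y i ^+ 2.
set C := \sum_(i < n) x i * y i.
have B0 : 0 <= B by apply: sumr_ge0 => i _; exact: sqr_ge0.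
have A0 : 0 <= A by apply: sumr_ge0 => i _; exact: sqr_ge0.
have key : forall t, 0 <= A - 2 * t * C + t ^+ 2 * B.
  move=> t.
  have -> : A - 2 * t * C + t ^+ 2 * B = \sum_(i < n) (x i - t * y i) ^+ 2.
    rewrite /A /B /C mulr_sumr mulr_sumr -sumrN -!big_split /=.
    by apply: eq_bigr => i _; ring.
  by apply: sumr_ge0 => i _; exact: sqr_ge0.
have [Bz|Bp] := eqVneq B 0.
  have y0 : forall i, y i = 0.
    move=> i; apply/eqP; rewrite -sqrf_eq0; apply/eqP.
    have := Bz; rewrite /B (bigD1 i) //= => /eqP; rewrite paddr_eq0.
    - by case/andP => /eqP.
    - exact: sqr_ge0.
    - by apply: sumr_ge0 => j _; exact: sqr_ge0.
  have -> : C = 0 by rewrite /C big1 // => i _; rewrite y0 mulr0.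
  by rewrite expr0n /= mulr_ge0.
have Bpos : 0 < B by rewrite lt_def Bp B0.
have := key (C / B).
have -> : A - 2 * (C / B) * C + (C / B) ^+ 2 * B = A - C ^+ 2 / B.
  by field; rewrite Bp.
rewrite subr_ge0 ler_pdivrMr //.
Qed.

Lemma cs (R : realType) (n : nat) (x y : 'I_n -> R) :
  \sum_(i < n) x i * y i <= enorm x * enorm y.
Proof.
rewrite /enorm -sqrtrM; last by apply: sumr_ge0 => i _; exact: sqr_ge0.
apply: le_trans (ler_norm _) _.
rewrite -sqrtr_sqr ler_sqrt; first exact: cs_sq.
by apply: mulr_ge0; apply: sumr_ge0 => i _; exact: sqr_ge0.
Qed.

Lemma prod_sum (R : realType) (U : finType) (m : nat) (g : U -> R) :
  \sum_(x : {ffun 'I_m -> U}) \prod_(j < m) g (x j) = (\sum_u g u) ^+ m.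
Proof.
rewrite -(bigA_distr_bigA (fun (_ : 'I_m) (u : U) => g u)) /=.
by rewrite prodr_const card_ord.
Qed.

Lemma S_eq (R : realType) (U : finType) (n m : nat) (h : U -> 'I_n)
  (v : 'I_n -> R) (x : {ffun 'I_m -> U}) :
  \sum_(i < n) v i * (kcount h x i)%:R = \sum_(j < m) v (h (x j)).
Proof.
rewrite [RHS](partition_big (fun j => h (x j)) predT) //=.
apply: eq_bigr => i _.
rewrite (eq_bigr (fun _ => v i)); last by move=> j /eqP ->.
rewrite /kcount -mulr_natr -sumr_const.
rewrite mul1r mulr_sumr mulr1; apply: eq_bigl => j; by rewrite inE.
Qed.

Lemma a_eq (R : realType) (U : finType) (n : nat) (q : U -> R) (h : U -> 'I_n)
  (v : 'I_n -> R) :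
  \sum_(i < n) v i * pslot q h i = \sum_u q u * v (h u).
Proof.
rewrite [RHS](partition_big h predT) //=.
apply: eq_bigr => i _; rewrite /pslot mulr_sumr.
by apply: eq_bigr => u /eqP ->; rewrite mulrC.
Qed.

Lemma psum (R : realType) (U : finType) (n : nat) (q : U -> R) (h : U -> 'I_n) :
  \sum_(i < n) pslot q h i = \sum_u q u.
Proof. by rewrite [RHS](partition_big h predT). Qed.

Lemma enorm1 (R : realType) (n : nat) : enorm (fun _ : 'I_n => 1 : R) = Num.sqrt (n%:R).
Proof. by rewrite /enorm (eq_bigr (fun _ => 1)) ?sumr_const ?card_ord // => i _; rewrite expr1n. Qed.

Lemma le_enorm (R : realType) (n : nat) (v : 'I_n -> R) i : 0 <= v i -> v i <= enorm v.
Proof.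
move=> v0; rewrite /enorm -(ger0_norm v0) -sqrtr_sqr ler_sqrt.
  rewrite (bigD1 i) //= lerDl; apply: sumr_ge0 => j _; exact: sqr_ge0.
by apply: sumr_ge0 => j _; exact: sqr_ge0.
Qed.

Lemma exp_lin (R : realType) (z s : R) : 0 <= z -> z <= s -> expR z <= 1 + z * expR s.
Proof.
move=> z0 zs.
have h1 : expR z <= 1 + z * expR z.
  have := expR_ge1Dx (- z); rewrite expRN => H.
  have ez := expR_gt0 z.
  have : (1 - z) * expR z <= 1.
    by have := ler_wpM2r (ltW ez) H; rewrite mulVf // lt0r_neq0.
  by rewrite mulrBl mul1r => H2; lra.
apply: le_trans h1 _; rewrite lerD2l ler_wpM2l // ler_expR //.
Qed.

Theorem corollary5 (R : realType) (U : finType) (q : U -> R) (n m : nat)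
  (h : U -> 'I_n) (L eps : R) (v : 'I_n -> R)
  (AST : {ffun 'I_m -> U} -> R) :
  is_prob q ->
  (24 < n)%N -> 0 < eps -> 9 < L -> m%:R = L * n%:R ->
  (forall i, 0 <= v i) -> \sum_(i < n) v i = 1 ->
  (forall x, AST x <= \sum_(i < n) v i * (kcount h x i)%:R) ->
  1 - 10 / 9 * expR (- (L * eps ^+ 2)) <=
  Pm q (fun x => AST x <=
         L * n%:R * enorm v * enorm (pslot q h) * (1 + 8 * eps) + 1).
Proof.
move=> [q0 q1] n24 e0 L9 hm v0 v1 hAST.
set c := enorm v; set P := enorm (pslot q h).
set T := L * n%:R * c * P * (1 + 8 * eps) + 1.
set E := (fun x : {ffun 'I_m -> U} => AST x <= T).
set w := (fun x : {ffun 'I_m -> U} => \prod_(j < m) q (x j)).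
have w0 : forall x, 0 <= w x by move=> x; apply: prodr_ge0 => j _.
have wsum : \sum_x w x = 1 by rewrite /w prod_sum q1 expr1n.
set N := \sum_(x | ~~ E x) w x.
have PmE : Pm q E = 1 - N.
  by rewrite -wsum (bigID E) /= /Pm addrK.
rewrite PmE.
set K := expR (- (L * eps ^+ 2)).
have K0 : 0 < K := expR_gt0 _.
suff : N <= K by move=> NK; lra.
have c0 : 0 <= c := sqrtr_ge0 _.
have P0 : 0 <= P := sqrtr_ge0 _.
have n0 : (0 : R) <= n%:R := ler0n _ _.
have vc : forall i, v i <= c by move=> i; exact: le_enorm.
have Sx : forall x, AST x <= \sum_(j < m) v (h (x j)) by move=> x; have := hAST x; rewrite S_eq.
have nP : 1 <= n%:R * P ^+ 2.
  have := @cs _ _ (pslot q h) (fun _ => 1); rewrite enorm1.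
  under eq_bigr do rewrite mulr1.
  rewrite psum q1 -/P => H.
  have sn := sqr_sqrtr n0.
  have sn0 : 0 <= Num.sqrt (n%:R : R) := sqrtr_ge0 _.
  rewrite -sn; nra.
have [caseA|caseB] := lerP 1 (P * (1 + 8 * eps)).
  rewrite /N big1; first exact: ltW.
  move=> x /negP []; rewrite /E.
  apply: le_trans (Sx x) _.
  apply: le_trans (_ : \sum_(j < m) c <= _).
    by apply: ler_sum => j _.
  rewrite sumr_const card_ord -mulr_natr hm /T.
  have : 0 <= c * (L * n%:R) by apply: mulr_ge0 => //; apply: mulr_ge0 => //; lra.
  nra.
have cpos : 0 < c.
  have := @cs _ _ v (fun _ => 1); under eq_bigr do rewrite mulr1.
  rewrite v1 => H; rewrite lt_def c0 andbT; apply/eqP => c00.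
  by move: H; rewrite -/c c00 mul0r ler10.
have a_le : \sum_u q u * v (h u) <= c * P by rewrite -a_eq; exact: cs.
have a0 : 0 <= \sum_u q u * v (h u) by apply: sumr_ge0 => u _; exact: mulr_ge0.
set a := \sum_u q u * v (h u).
set s := 2 * eps / (1 + 2 * eps).
have s0 : 0 < s by rewrite /s divr_gt0 //; lra.
set t := s / c.
have t0 : 0 < t by exact: divr_gt0.
have tc : t * c = s by rewrite /t mulfVK // lt0r_neq0.
have es : expR s <= 1 + 2 * eps.
  have H := expR_ge1Dx (- s); rewrite expRN in H.
  have ez := expR_gt0 s.
  have H2 : (1 - s) * expR s <= 1.
    by have := ler_wpM2r (ltW ez) H; rewrite mulVf // lt0r_neq0.
  have H3 : (1 - s) * (1 + 2 * eps) = 1 by rewrite /s; field; lra.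
  have -> : expR s = (1 - s) * expR s * (1 + 2 * eps).
    by rewrite mulrAC H3 mul1r.
  by rewrite ler_piMl //; lra.
set G := \sum_u q u * expR (t * v (h u)).
have G0 : 0 <= G by apply: sumr_ge0 => u _; apply: mulr_ge0 => //; exact: ltW (expR_gt0 _).
have Gle : G <= 1 + t * expR s * a.
  apply: le_trans (_ : \sum_u q u * (1 + t * v (h u) * expR s) <= _).
    apply: ler_sum => u _; apply: ler_wpM2l => //; apply: exp_lin.
      by apply: mulr_ge0 => //; exact: ltW.
    by rewrite -tc ler_wpM2l // ltW.
  rewrite le_eqVlt; apply/orP; left; apply/eqP.
  transitivity (\sum_u q u + t * expR s * a); last by rewrite q1.
  rewrite /a mulr_sumr -big_split /=; apply: eq_bigr => u _; ring.
have chain1 : N <= \sum_x w x * expR (t * (\sum_(j < m) v (h (x j)) - T)).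
  apply: le_trans (_ : \sum_(x | ~~ E x) w x * expR (t * (\sum_(j < m) v (h (x j)) - T)) <= _).
    apply: ler_sum => x nE; rewrite -[X in X <= _]mulr1 ler_wpM2l //.
    apply: le_trans (expR_ge1Dx _); rewrite lerDl; apply: mulr_ge0; first exact: ltW.
    rewrite subr_ge0; apply: le_trans (Sx x); apply: ltW; move: nE; rewrite /E.
    by rewrite -ltNge.
  rewrite [X in _ <= X](bigID E) /=; apply: ler_wpDl; last exact: lexx.
  apply: sumr_ge0 => x _; apply: mulr_ge0 => //; exact: ltW (expR_gt0 _).
have eq2 : \sum_x w x * expR (t * (\sum_(j < m) v (h (x j)) - T)) = expR (- (t * T)) * G ^+ m.
  rewrite /G -prod_sum mulr_sumr; apply: eq_bigr => x _.
  rewrite mulrBr expRD mulr_sumr expR_sum /w big_split /=; ring.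
have Gm : G ^+ m <= expR (m%:R * (t * expR s * a)).
  rewrite expRM_natl; apply: le_trans (_ : (1 + t * expR s * a) ^+ m <= _).
    by apply: lerXn2r; rewrite ?nnegrE //; apply: le_trans Gle.
  apply: lerXn2r; rewrite ?nnegrE //.
    by apply: addr_ge0 => //; apply: mulr_ge0 => //; apply: mulr_ge0; [exact: ltW| exact: ltW (expR_gt0 _)].
    exact: ltW (expR_gt0 _).
  exact: expR_ge1Dx.
have fin : m%:R * (t * expR s * a) - t * T <= - (L * eps ^+ 2).
  have Ppos : 0 < P.
    rewrite lt_def P0 andbT; apply/eqP => P00; move: nP; rewrite P00 expr0n /= mulr0 ler10 //.
  have nPe : 1 + 8 * eps <= n%:R * P.
    have : (1 + 8 * eps) * 1 <= (1 + 8 * eps) * (n%:R * P ^+ 2) by rewrite ler_wpM2l //; lra.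
    rewrite mulr1 => H; apply: le_trans H _.
    have -> : (1 + 8 * eps) * (n%:R * P ^+ 2) = (n%:R * P) * (P * (1 + 8 * eps)) by ring.
    rewrite ler_piMr //; [exact: mulr_ge0 | exact: ltW].
  have es0 := expR_gt0 s.
  have F1 : m%:R * (t * expR s * a) <= m%:R * s * P * expR s.
    set e := expR s; rewrite -tc; have -> : m%:R * (t * c) * P * e = (m%:R * t * e) * (c * P) by ring.
    have -> : m%:R * (t * e * a) = (m%:R * t * e) * a by ring.
    rewrite ler_wpM2l //; apply: mulr_ge0; [apply: mulr_ge0 => //; exact: ltW | exact: ltW].
  have F2 : m%:R * s * P * (1 + 8 * eps) <= t * T.
    rewrite /T hm; have -> : t * (L * n%:R * c * P * (1 + 8 * eps) + 1) = L * n%:R * (t * c) * P * (1 + 8 * eps) + t by ring.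
    rewrite tc lerDl; exact: ltW.
  have M0 : 0 <= m%:R * s * P by apply: mulr_ge0 => //; apply: mulr_ge0 => //; exact: ltW.
  have F3 : m%:R * s * P * expR s <= m%:R * s * P * (1 + 2 * eps) by rewrite ler_wpM2l.
  have F4 : m%:R * s * P * (6 * eps) >= L * eps ^+ 2.
    rewrite hm /s.
    have -> : L * n%:R * (2 * eps / (1 + 2 * eps)) * P * (6 * eps) = (L * eps ^+ 2) * (12 * (n%:R * P)) / (1 + 2 * eps).
      by field; lra.
    rewrite ler_pdivlMr; last lra.
    apply: ler_wpM2l; [apply: mulr_ge0; [lra | exact: sqr_ge0] | lra].
  lra.
apply: le_trans chain1 _; rewrite eq2.
apply: le_trans (_ : expR (- (t * T)) * expR (m%:R * (t * expR s * a)) <= _).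
  by rewrite ler_wpM2l //; exact: ltW (expR_gt0 _).
rewrite -expRD addrC.
apply: le_trans (_ : K <= _).
  by rewrite ler_expR.
exact: lexx.
Qed.
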